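(* Suppose a system $C=(1,c_2,c_3,c_4,c_5,c_6)$ is canonical and its subsystem $(1,c_2,c_3,c_4,c_5)$ is noncanonical. Then $c_6$ is equal to $2c_5-c_2$, $2c_5-c_3$, or $2c_5-c_4$.
   Context: A system is a tuple $C=(c_1,\dots,c_n)$ of integers with $1=c_1<c_2<\dots<c_n$; for $k\le n$, $(c_1,\dots,c_k)$ is a subsystem. For a positive integer $v$, $\mathrm{opt}_C(v)$ is the minimum of $\sum_i x_i$ over $x\in\mathbb{Z}_{\ge0}^n$ with $\sum_i c_ix_i=v$. The greedy representation of $v$ is produced by: for $i=n$ down to $1$, while $c_i\le$ remaining value, take a coin $c_i$. $\mathrm{grd}_C(v)$ is its number of coins. A positive integer $w$ is a counterexample if $\mathrm{opt}_C(w)<\mathrm{grd}_C(w)$; $C$ is canonical if it has none, noncanonical otherwise. *)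

(* Defs.v *)
From mathcomp Require Import all_boot.
Set Implicit Arguments. Unset Strict Implicit. Unset Printing Implicit Defensive.

Definition is_system (C : seq nat) : Prop :=
  head 0 C = 1 /\ sorted ltn C.

Definition value (C x : seq nat) : nat :=
  \sum_(i < size C) nth 0 C i * nth 0 x i.

Definition repr (C : seq nat) (v : nat) (x : seq nat) : Prop :=
  size x = size C /\ value C x = v.

Definition is_opt (C : seq nat) (v m : nat) : Prop :=
  (exists x, repr C v x /\ sumn x = m) /\
  (forall x, repr C v x -> m <= sumn x).

(* Greedy: process coins from largest to smallest, taking v %/ c copies
   of coin c (this is exactly "while c <= remaining, take c").
   grd_rev takes the coins in decreasing order. *)
Fixpoint grd_rev (cs : seq nat) (v : nat) : nat :=
  match cs with
  | [::] => 0
  | c :: cs' => v %/ c + grd_rev cs' (v %% c)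
  end.

Definition grd (C : seq nat) (v : nat) : nat := grd_rev (rev C) v.

Definition counterexample (C : seq nat) (w : nat) : Prop :=
  0 < w /\ exists m, is_opt C w m /\ m < grd C w.

Definition canonical (C : seq nat) : Prop :=
  forall w, ~ counterexample C w.

Definition noncanonical (C : seq nat) : Prop :=
  exists w, counterexample C w.

(* Main.v *)
Require Import Defs.
From mathcomp Require Import all_boot.
From mathcomp Require Import zify.
From Stdlib Require Import Classical.
Set Implicit Arguments. Unset Strict Implicit.
Ltac li := intros; repeat match goal with H : ?P |- _ => match type of P with Prop => revert H end end;
  repeat match goal with |- context [?a %/ ?b] => generalize (a %/ b) | |- context [?a %% ?b] => generalize (a %% b) end;
  intros; lia.

Definition G2 c2 t := t %/ c2 + t %% c2.
Definition G3 c2 c3 t := t %/ c3 + G2 c2 (t %% c3).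
Definition G4 c2 c3 c4 t := t %/ c4 + G3 c2 c3 (t %% c4).
Definition G5 c2 c3 c4 c5 t := t %/ c5 + G4 c2 c3 c4 (t %% c5).
Definition R5 c2 c3 c4 c5 v k := exists x1 x2 x3 x4 x5,
  x1 + c2*x2 + c3*x3 + c4*x4 + c5*x5 = v /\ x1+x2+x3+x4+x5 = k.

Lemma opt_ex (C : seq nat) (v k : nat) (x : seq nat) : Defs.repr C v x -> sumn x <= k -> exists m, is_opt C v m.
Proof.
elim: k x => [|k IH] x Hx Hk.
  exists 0; split; first by exists x; split => //; li.
  by move=> *.
case: (classic (exists y, Defs.repr C v y /\ sumn y <= k)).
  by case=> y [Hy Hyk]; exact: (IH y).
move=> Hno; exists (sumn x); split; first by exists x.
move=> y Hy; case: (leqP (sumn x) (sumn y)) => // H.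
by exfalso; apply: Hno; exists y; split => //; li.
Qed.

Lemma canon_le (C : seq nat) (v : nat) (x : seq nat) : canonical C -> Defs.repr C v x -> 0 < v -> grd C v <= sumn x.
Proof.
move=> Hc Hx Hv; have [m Hm] := opt_ex Hx (leqnn _).
case: (leqP (grd C v) (sumn x)) => // H; exfalso.
apply: (Hc v); split => //; exists m; split => //.
have := (proj2 Hm) x Hx; li.
Qed.

Lemma pos_step d t (H : nat -> nat) :
  (forall s, 0 < s -> 0 < H s) -> 0 < t -> 0 < t %/ d + H (t %% d).
Proof.
move=> HH Ht; case: (posnP (t %% d)) => Hm.
  have := divn_eq t d; rewrite Hm; case: (t %/ d) => //=; li.
by move: (HH _ Hm) => h; apply: leq_trans h (leq_addl _ _).
Qed.

Lemma one_step d t (H : nat -> nat) :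
  (forall s, 0 < s -> 0 < H s) -> 0 < d -> 0 < t -> t %/ d + H (t %% d) <= 1 ->
  t = d \/ (t < d /\ H t <= 1).
Proof.
move=> HH Hd Ht Hle; case: (posnP (t %% d)) => Hm.
  left; have := divn_eq t d; rewrite Hm.
  move: Hle; case: (t %/ d) => [|[|q]] /=; li.
right; have := HH _ Hm => Hp.
have Hq : t %/ d = 0 by move: Hle Hp; generalize (H (t %% d)) => u; li.
have Htd : t < d by rewrite (divn_eq t d) Hq mul0n add0n ltn_mod.
by split => //; rewrite Hq modn_small // in Hle.
Qed.

Lemma G2_pos c2 s : 0 < s -> 0 < G2 c2 s.
Proof. by move=> Hs; apply: (@pos_step c2 s id). Qed.
Lemma G3_pos c2 c3 s : 0 < s -> 0 < G3 c2 c3 s.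
Proof. by move=> Hs; apply: (@pos_step c3 s (G2 c2)) => // ?; apply: G2_pos. Qed.
Lemma G4_pos c2 c3 c4 s : 0 < s -> 0 < G4 c2 c3 c4 s.
Proof. by move=> Hs; apply: (@pos_step c4 s (G3 c2 c3)) => // ?; apply: G3_pos. Qed.

Lemma G5_sub c2 c3 c4 c5 v : 0 < c5 -> c5 <= v ->
  G5 c2 c3 c4 c5 v = (G5 c2 c3 c4 c5 (v - c5)).+1.
Proof.
move=> H5 Hv; rewrite /G5.
have E : v = (v - c5) + 1 * c5 by li.
rewrite {1 2}E.
rewrite divnDMl // mul1n modnDr addn1 addSn. by [].
Qed.

Lemma R5_add c2 c3 c4 c5 a b k1 k2 :
  R5 c2 c3 c4 c5 a k1 -> R5 c2 c3 c4 c5 b k2 -> R5 c2 c3 c4 c5 (a + b) (k1 + k2).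
Proof.
move=> [x1 [x2 [x3 [x4 [x5 [Ha Hk]]]]]] [y1 [y2 [y3 [y4 [y5 [Hb Hl]]]]]].
exists (x1+y1), (x2+y2), (x3+y3), (x4+y4), (x5+y5); split; last li.
rewrite !mulnDr; li.
Qed.

Lemma R5_greedy c2 c3 c4 c5 v : R5 c2 c3 c4 c5 v (G5 c2 c3 c4 c5 v).
Proof.
rewrite /G5 /G4 /G3 /G2.
set t5 := v %% c5; set t4 := t5 %% c4; set t3 := t4 %% c3.
exists (t3 %% c2), (t3 %/ c2), (t4 %/ c3), (t5 %/ c4), (v %/ c5); split; last li.
have E5 := divn_eq v c5; have E4 := divn_eq t5 c4.
have E3 := divn_eq t4 c3; have E2 := divn_eq t3 c2.
rewrite -/t5 in E5; rewrite -/t4 in E4; rewrite -/t3 in E3.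
rewrite [c2 * _]mulnC [c3 * _]mulnC [c4 * _]mulnC [c5 * _]mulnC. li.
Qed.

Theorem lemma5 (c2 c3 c4 c5 c6 : nat) :
  is_system [:: 1; c2; c3; c4; c5; c6] ->
  canonical [:: 1; c2; c3; c4; c5; c6] ->
  noncanonical [:: 1; c2; c3; c4; c5] ->
  c6 = 2 * c5 - c2 \/ c6 = 2 * c5 - c3 \/ c6 = 2 * c5 - c4.
Proof.
move=> [_ /= Hs] Hcan [w [Hw [m [Hm Hlt]]]].
move: Hs => /andP [H12 /andP [H23 /andP [H34 /andP [H45 /andP [H56 _]]]]].
have grdC : forall v, grd [:: 1; c2; c3; c4; c5; c6] v = v %/ c6 + G5 c2 c3 c4 c5 (v %% c6).
  by move=> v; rewrite /grd /rev /= divn1 /G5 /G4 /G3 /G2; li.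
have grdC' : forall v, grd [:: 1; c2; c3; c4; c5] v = G5 c2 c3 c4 c5 v.
  by move=> v; rewrite /grd /rev /= divn1 /G5 /G4 /G3 /G2; li.
have val6 : forall a b c d e f, value [:: 1; c2; c3; c4; c5; c6] [:: a; b; c; d; e; f]
   = a + c2 * b + c3 * c + c4 * d + c5 * e + c6 * f.
  by move=> *; rewrite /value /= !big_ord_recl big_ord0 /=; li.
have val5 : forall a b c d e, value [:: 1; c2; c3; c4; c5] [:: a; b; c; d; e]
   = a + c2 * b + c3 * c + c4 * d + c5 * e.
  by move=> *; rewrite /value /= !big_ord_recl big_ord0 /=; li.
have small : forall v k, v < c6 -> R5 c2 c3 c4 c5 v k -> G5 c2 c3 c4 c5 v <= k.
  move=> v k Hv [x1 [x2 [x3 [x4 [x5 [Hv' Hk]]]]]].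
  case: (posnP v) => Hv0.
    by rewrite Hv0 /G5 /G4 /G3 /G2 !(div0n, mod0n).
  have Hr : Defs.repr [:: 1; c2; c3; c4; c5; c6] v [:: x1; x2; x3; x4; x5; 0].
    by split => //; rewrite val6; li.
  have := canon_le Hcan Hr Hv0; rewrite grdC divn_small // modn_small //= => H; li.
have Hc6 : c6 < c4 + c5.
  case: (leqP (c4 + c5) c6) => // Hbig; exfalso.
  have main : forall n v k, v <= n -> R5 c2 c3 c4 c5 v k -> G5 c2 c3 c4 c5 v <= k.
    elim=> [|n IH] v k Hvn HR.
      by move: Hvn; rewrite leqn0 => /eqP E; subst v; rewrite /G5 /G4 /G3 /G2 !(div0n, mod0n).
    case: (ltnP v c6) => Hv6; first exact: small.
    have step5 : forall k', R5 c2 c3 c4 c5 (v - c5) k' -> G5 c2 c3 c4 c5 v <= k'.+1.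
      move=> k' Hk'; rewrite G5_sub; try li.
      have := IH (v - c5) k' ltac:(li) Hk'; li.
    have coin : forall c k', 0 < c -> c <= c4 -> R5 c2 c3 c4 c5 c 1 ->
        R5 c2 c3 c4 c5 (v - c) k' -> G5 c2 c3 c4 c5 v <= k'.+1.
      move=> c k' Hc0 Hc4 Rc Ru.
      have Hu := IH (v - c) k' ltac:(li) Ru.
      rewrite G5_sub in Hu; try li.
      have Rg := R5_greedy c2 c3 c4 c5 (v - c - c5).
      have := R5_add Rc Rg.
      have -> : c + (v - c - c5) = v - c5 by li.
      move=> /step5; li.
    move: HR => [x1 [x2 [x3 [x4 [x5 [Hv' Hk]]]]]].
    case: x5 Hv' Hk => [|x5] Hv' Hk.
      case: x1 Hv' Hk => [|x1] Hv' Hk.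
        case: x2 Hv' Hk => [|x2] Hv' Hk.
          case: x3 Hv' Hk => [|x3] Hv' Hk.
            case: x4 Hv' Hk => [|x4] Hv' Hk; first li.
            have := coin c4 (k.-1) ltac:(li) (leqnn _) ltac:(by exists 0,0,0,1,0; split; li)
              ltac:(by exists 0,0,0,x4,0; split => //; rewrite mulnS in Hv'; li); li.
          have := coin c3 (k.-1) ltac:(li) ltac:(li) ltac:(by exists 0,0,1,0,0; split; li)
            ltac:(by exists 0,0,x3,x4,0; split => //; rewrite mulnS in Hv'; li); li.
        have := coin c2 (k.-1) ltac:(li) ltac:(li) ltac:(by exists 0,1,0,0,0; split; li)
          ltac:(by exists 0,x2,x3,x4,0; split => //; rewrite mulnS in Hv'; li); li.
      have := coin 1 (k.-1) ltac:(li) ltac:(li) ltac:(by exists 1,0,0,0,0; split; li)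
        ltac:(by exists x1,x2,x3,x4,0; split => //; li); li.
    have := step5 (k.-1) ltac:(by exists x1,x2,x3,x4,x5; split => //; rewrite mulnS in Hv'; li); li.
  move: Hm => [[x [[Hsz Hval] Hsum]] _].
  case: x Hsz Hval Hsum => [|a [|b [|c [|d [|e [|? ?]]]]]] //= _ Hval Hsum.
  rewrite val5 in Hval.
  have := main w w m (leqnn _) ltac:(by exists a,b,c,d,e; split => //; rewrite -Hsum /=; li).
  rewrite grdC' in Hlt; li.
have Hr : Defs.repr [:: 1; c2; c3; c4; c5; c6] (2 * c5) [:: 0; 0; 0; 0; 2; 0].
  by split => //; rewrite val6; li.
have := canon_le Hcan Hr ltac:(li).
have E : 2 * c5 = (2 * c5 - c6) + 1 * c6 by li.
rewrite grdC E divnDMl; last li.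
rewrite mul1n modnDr.
set r := 2 * c5 - c6.
have Hr6 : r < c6 by rewrite /r; li.
rewrite divn_small // modn_small // /= => Hg.
have Hr5 : r < c5 by rewrite /r; li.
rewrite /G5 divn_small // modn_small // add0n in Hg.
have Hr0 : 0 < r by rewrite /r; li.
case: (@one_step c4 r (G3 c2 c3) (fun s => @G3_pos c2 c3 s) ltac:(li) Hr0 ltac:(rewrite /G4 in Hg; li)) => [Er|[Hr4 Hg3]].
  right; right; rewrite /r in Er; li.
case: (@one_step c3 r (G2 c2) (fun s => @G2_pos c2 s) ltac:(li) Hr0 ltac:(rewrite /G3 in Hg3; li)) => [Er|[Hr3 Hg2]].
  right; left; rewrite /r in Er; li.
case: (@one_step c2 r id (fun s Hs => Hs) ltac:(li) Hr0 Hg2) => [Er|[Hr2 Hg1]].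
  left; rewrite /r in Er; li.
exfalso; rewrite /r in Hg1 Hr0; li.
Qed.
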